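(* For all integers $v\ge w\ge 2$ and $t\ge 2$ with $w\le\lfloor t^2/4\rfloor+t$, we have $v-w+1\le I_t(w,v)\le v$.
   Context: A $(w,v)$ set system is a pair $(\mathcal{X},\mathcal{B})$ with $|\mathcal{X}|=v$ and $\mathcal{B}$ a family of $w$-element subsets (blocks) of $\mathcal{X}$. For a $w$-subset $T\subseteq\mathcal{X}$ let $P_t(T)=\{\mathcal{P}\subseteq\mathcal{B}: |\mathcal{P}|\le t,\ T\subseteq\bigcup_{B\in\mathcal{P}}B\}$. The set system is a $t$-IPPS$(w,v)$ if for every $w$-subset $T\subseteq\mathcal{X}$, either $P_t(T)=\emptyset$ or $\bigcap_{\mathcal{P}\in P_t(T)}\mathcal{P}\neq\emptyset$. $I_t(w,v)$ denotes the maximum of $|\mathcal{B}|$ over all $t$-IPPS$(w,v)$. *)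

(* Defs.v *)
From mathcomp Require Import all_boot.
Set Implicit Arguments. Unset Strict Implicit. Unset Printing Implicit Defensive.

Definition Pt (v t : nat) (B : {set {set 'I_v}}) (T : {set 'I_v})
  : {set {set {set 'I_v}}} :=
  [set P : {set {set 'I_v}} |
     [&& P \subset B, #|P| <= t & T \subset \bigcup_(Bl in P) Bl]].

Definition is_IPPS (t w v : nat) (B : {set {set 'I_v}}) : bool :=
  [forall Bl in B, #|Bl| == w] &&
  [forall T : {set 'I_v}, (#|T| == w) ==>
     ((Pt t B T == set0) || (\bigcap_(P in Pt t B T) P != set0))].

Definition I_t (t w v : nat) : nat :=
  \max_(B : {set {set 'I_v}} | is_IPPS t w B) #|B|.

(* Main.v *)
Require Import Defs.
From mathcomp Require Import all_boot zify.
Set Implicit Arguments. Unset Strict Implicit. Unset Printing Implicit Defensive.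

Lemma subset_card (T : finType) (A : {set T}) n :
  n <= #|A| -> exists2 A' : {set T}, A' \subset A & #|A'| = n.
Proof.
elim: n => [|n IH] hn; first by exists set0; rewrite ?sub0set ?cards0.
have [A' sA' cA'] := IH (ltnW hn).
have : ~~ (A \subset A').
  apply/negP => /subset_leq_card; rewrite cA'; lia.
case/subsetPn => x xA xA'.
exists (x |: A'); last by rewrite cardsU1 xA' cA'.
by apply/subsetP => y /setU1P [->|/(subsetP sA')].
Qed.

Lemma sum_card_disj (J T : finType) (f : J -> {set T}) n (I : {set J}) :
  #|I| = n ->
  (forall i j x, i \in I -> j \in I -> x \in f i -> x \in f j -> i = j) ->
  \sum_(i in I) #|f i| <= #|\bigcup_(i in I) f i|.
Proof.
elim: n I => [|n IH] I hI hd.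
  move/eqP: hI; rewrite cards_eq0 => /eqP ->.
  by rewrite big_set0.
have : (0 < #|I|) by rewrite hI.
case/card_gt0P => i iI.
rewrite (bigD1 i iI) (bigD1 i iI) /=.
have e1 : \sum_(j in I | j != i) #|f j| = \sum_(j in I :\ i) #|f j|.
  by apply: eq_bigl => j; rewrite in_setD1 andbC.
have e2 : \bigcup_(j in I | j != i) f j = \bigcup_(j in I :\ i) f j.
  by apply: eq_bigl => j; rewrite in_setD1 andbC.
rewrite e1 e2.
have h1 : #|I :\ i| = n by move: hI; rewrite (cardsD1 i) iI; case.
have := IH (I :\ i) h1.
have hd' : forall a b x, a \in I :\ i -> b \in I :\ i -> x \in f a -> x \in f b -> a = b.
  by move=> a b x /setD1P [_ ?] /setD1P [_ ?]; apply: hd.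
move/(_ hd') => le1.
rewrite cardsU.
have -> : f i :&: \bigcup_(j in I :\ i) f j = set0.
  apply/setP => x; rewrite !inE; apply/negP => /andP [xi /bigcupP [j /setD1P [ji jI] xj]].
  by move/eqP: ji; apply; apply: (hd j i x).
rewrite cards0 subn0; lia.
Qed.

Lemma no_common t w v (F : {set {set 'I_v}}) (T : {set 'I_v}) P0 :
  is_IPPS t w F -> #|T| = w -> P0 \in Pt t F T ->
  (forall Z, Z \in P0 -> exists2 P, P \in Pt t F T & Z \notin P) -> False.
Proof.
move=> /andP [_ /forallP /(_ T)] hI hT hP0 hk.
move: hI; rewrite hT eqxx /= => /orP [/eqP h|h].
  by move: hP0; rewrite h inE.
case/set0Pn: h => Z /bigcapP hZ.
have [P hP ZP] := hk Z (hZ _ hP0).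
by move: ZP; rewrite hZ.
Qed.

Lemma uniformP t w v (F : {set {set 'I_v}}) C :
  is_IPPS t w F -> C \in F -> #|C| = w.
Proof. by move=> /andP [/forall_inP h _] /h /eqP. Qed.

Lemma PtE t v (F : {set {set 'I_v}}) T P :
  (P \in Pt t F T) = [&& P \subset F, #|P| <= t & T \subset \bigcup_(Bl in P) Bl].
Proof. by rewrite inE. Qed.

Lemma IPPS_sub t w v (F F' : {set {set 'I_v}}) :
  is_IPPS t w F -> F' \subset F -> is_IPPS t w F'.
Proof.
move=> hI hs; apply/andP; split.
  by apply/forall_inP => C /(subsetP hs) /(uniformP hI) ->.
apply/forallP => T; apply/implyP => hT.
case/andP: hI => _ /forallP /(_ T); rewrite hT /= => /orP [/eqP h|h].
  apply/orP; left; apply/eqP/setP => P; rewrite in_set0 PtE.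
  apply/negP => /andP [hP1 hP2].
  have : P \in Pt t F T by rewrite PtE (subset_trans hP1 hs).
  by rewrite h inE.
apply/orP; right; case/set0Pn: h => Z /bigcapP hZ.
apply/set0Pn; exists Z; apply/bigcapP => P.
rewrite PtE => /andP [hP1 hP2]; apply: hZ.
by rewrite PtE (subset_trans hP1 hs).
Qed.

Lemma cover_sub v (P : {set {set 'I_v}}) (S : {set 'I_v}) :
  (forall x, x \in S -> exists2 D, D \in P & x \in D) ->
  S \subset \bigcup_(Bl in P) Bl.
Proof.
move=> h; apply/subsetP => x /h [D DP xD]; apply/bigcupP; by exists D.
Qed.

Lemma lower t w v : 2 <= w -> w <= v -> v - w + 1 <= I_t t w v.
Proof.
move=> hw hv.
have [S0 _ cS0] : exists2 S0 : {set 'I_v}, S0 \subset [set: 'I_v] & #|S0| = w.-1.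
  by apply: subset_card; rewrite cardsT card_ord; lia.
pose F0 := [set x |: S0 | x in ~: S0].
have hF0 : is_IPPS t w F0.
  apply/andP; split.
    apply/forall_inP => C /imsetP [x]; rewrite inE => xS ->.
    by rewrite cardsU1 xS cS0; apply/eqP; lia.
  apply/forallP => T; apply/implyP => /eqP hT.
  apply/orP; right.
  have : ~~ (T \subset S0) by apply/negP => /subset_leq_card; lia.
  case/subsetPn => x xT xS.
  apply/set0Pn; exists (x |: S0); apply/bigcapP => P.
  rewrite PtE => /and3P [hP1 _ hP3].
  have /bigcupP [D DP xD] := subsetP hP3 x xT.
  move: (subsetP hP1 D DP) => /imsetP [y _ eD].
  move: xD; rewrite eD => /setU1P [exy|]; last by rewrite (negbTE xS).
  by rewrite exy -eD.
have cF0 : #|F0| = v - w + 1.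
  rewrite card_in_imset.
    have := cardsC S0; rewrite cS0 card_ord; lia.
  move=> x y; rewrite !inE => xS yS exy.
  have : x \in y |: S0 by rewrite -exy setU11.
  by case/setU1P => // xS'; rewrite xS' in xS.
rewrite -cF0 /I_t; exact: (@leq_bigmax_cond _ (fun B => is_IPPS t w B) (fun B => #|B|) F0 hF0).
Qed.

Lemma arith t : t^2 %/ 4 <= t./2 * (t - t./2).
Proof. rewrite -divn2. have h : t^2 = t * t by rewrite expnS expn1. rewrite h. nia. Qed.
Lemma ar2 t : 2 <= t -> 1 <= t./2 /\ t./2 < t.
Proof. rewrite -divn2. lia. Qed.

Lemma card3 (T : finType) (a : T) (X Y : {set T}) : #|a |: X :|: Y| <= 1 + #|X| + #|Y|.
Proof.
apply: (leq_trans (leq_card_setU _ _)); rewrite cardsU1 leq_add2r.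
by case: (a \notin X).
Qed.

Lemma arA a b c k r t : a <= c -> k = 1 + b -> c < r -> k + r = t -> 1 + b + a <= t.
Proof. lia. Qed.
Lemma arB a b c k r t : a <= c -> k = 1 + b -> c = r -> k + r = t -> 1 + b + a <= t.
Proof. lia. Qed.

Lemma key t w v (F : {set {set 'I_v}}) B :
  is_IPPS t w F -> 2 <= t -> w <= t^2 %/ 4 + t -> B \in F ->
  (forall C x, C \in F -> x \in C -> exists2 D, D \in F & (x \in D) && (D != C)) -> False.
Proof.
move=> hI ht hw BF hall.
pose O (C : {set 'I_v}) x := odflt C [pick D in F | (x \in D) && (D != C)].
have Ospec : forall C x, C \in F -> x \in C -> [/\ O C x \in F, x \in O C x & O C x != C].
  move=> C x CF xC; rewrite /O; case: pickP => [D /andP [DF /andP [xD DC]]|h] //=.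
  have [D DF hD] := hall C x CF xC.
  by move: (h D); rewrite DF hD.
have frame : forall (C : {set 'I_v}) (G : {set {set 'I_v}}), C \in F -> G \subset F -> C \notin G -> #|G| <= t ->
    C \subset \bigcup_(Bl in G) Bl -> False.
  move=> C G CF GF CG Gt CS.
  apply: (@no_common t w v F C [set C] hI (uniformP hI CF)).
    by rewrite PtE sub1set CF cards1 (leq_trans _ ht) //= big_set1 subxx.
  move=> Z; rewrite inE => /eqP ->; exists G => //; by rewrite PtE GF Gt CS.
have grow : forall n, n <= t -> exists G : {set {set 'I_v}},
    [/\ G \subset F, B \notin G, #|G| = n & n <= #|B :&: \bigcup_(Bl in G) Bl|].
  elim=> [|n IH] hn.
    by exists set0; rewrite sub0set in_set0 cards0.
  have [G [GF BG cG hG]] := IH (ltnW hn).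
  have : ~~ (B \subset \bigcup_(Bl in G) Bl).
    by apply/negP => hs; apply: (frame B G) => //; rewrite cG ltnW.
  case/subsetPn => x xB xG.
  have [DF xD DB] := Ospec B x BF xB.
  have DG : O B x \notin G.
    by apply/negP => DG; apply: (negP xG); apply/bigcupP; exists (O B x).
  exists (O B x |: G); split.
  - by apply/subsetP => Z /setU1P [->|/(subsetP GF)].
  - by rewrite in_setU1 negb_or eq_sym DB BG.
  - by rewrite cardsU1 DG cG.
  - have sub : x |: (B :&: \bigcup_(Bl in G) Bl) \subset B :&: \bigcup_(Bl in O B x |: G) Bl.
      apply/subsetP => y /setU1P [->|].
        by rewrite inE xB /=; apply/bigcupP; exists (O B x) => //; rewrite setU11.
      rewrite !inE => /andP [yB /bigcupP [Z ZG yZ]]; rewrite yB /=; apply/bigcupP.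
      by exists Z => //; rewrite in_setU1 ZG orbT.
    apply: leq_trans (subset_leq_card sub).
    by rewrite cardsU1 inE xB (negbTE xG) /= add1n ltnS.
have [hk1 hk2] := ar2 ht.
have har := arith t.
set k := t./2 in hk1 hk2 har.
set r := t - k in har.
have hkr : k + r = t by rewrite /r subnKC // ltnW.
have hwk : w <= t + k * r by apply: (leq_trans hw); rewrite addnC leq_add2l.
clearbody k r; clear hw har.
have [G [GF BG cG hG]] := grow t (leqnn t).
have [Cs sCs cCs] : exists2 Cs : {set {set 'I_v}}, Cs \subset G & #|Cs| = k.
  by apply: subset_card; rewrite cG; exact: ltnW hk2.
have CsF : Cs \subset F := subset_trans sCs GF.
have BCs : B \notin Cs by apply/negP => /(subsetP sCs); rewrite (negbTE BG).
have CsB : forall C, C \in Cs -> C != B.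
  by move=> C CCs; apply/negP => /eqP eC; rewrite -eC CCs in BCs.
pose Priv (C : {set 'I_v}) := [set x in C | (x \notin B) && [forall C' in Cs, (x \in C') ==> (C' == C)]].
have PrivC : forall C x, x \in Priv C -> x \in C by move=> C x; rewrite inE => /andP [].
have coverC : forall C x, C \in Cs -> x \in C ->
    [\/ x \in B, exists2 C', C' \in Cs :\ C & x \in C' | x \in Priv C].
  move=> C x CCs xC.
  case: (boolP (x \in B)) => xB; first by constructor 1.
  case: (boolP [forall C' in Cs, (x \in C') ==> (C' == C)]) => h.
    by constructor 3; rewrite inE xC xB h.
  constructor 2; move/forallPn: h => [C']; rewrite !negb_imply => /andP [C'Cs /andP [xC' C'C]].
  by exists C' => //; rewrite in_setD1 C'C.
case: (boolP [exists C in Cs, #|Priv C| < r]).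
  case/exists_inP => C CCs hP.
  have CF := subsetP CsF C CCs.
  apply: (frame C (B |: (Cs :\ C) :|: (O C @: Priv C))) => //.
  - apply/subsetP => Z /setUP [/setU1P [->|/setD1P [_ /(subsetP CsF)]] //|].
    by case/imsetP => x xP ->; have [] := Ospec C x CF (PrivC _ _ xP).
  - rewrite !inE eqxx /= (negbTE (CsB C CCs)) /=; apply/imsetP => [[x xP eC]].
    by have [_ _] := Ospec C x CF (PrivC _ _ xP); rewrite -eC eqxx.
  - apply: (leq_trans (card3 _ _ _)).
    have h1 := leq_imset_card (O C) (Priv C).
    have h2 : #|Cs| = (C \in Cs) + #|Cs :\ C| := cardsD1 C Cs.
    rewrite CCs in h2.
    rewrite cCs in h2.
    exact: (arA h1 h2 hP hkr).
  - apply: cover_sub => x xC; case: (coverC C x CCs xC) => [xB|[C' C'C xC']|xP].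
    + by exists B; rewrite // !inE eqxx.
    + by exists C' => //; rewrite in_setU in_setU1 C'C orbT.
    + exists (O C x); first by rewrite inE; apply/orP; right; apply/imsetP; exists x.
      by have [] := Ospec C x CF (PrivC _ _ xP).
move=> hB.
have hr : forall C, C \in Cs -> r <= #|Priv C|.
  move=> C CCs; rewrite leqNgt; apply/negP => h; apply: (negP hB); apply/exists_inP.
  by exists C.
pose P (C : {set 'I_v}) := odflt set0 [pick X : {set 'I_v} | (X \subset Priv C) && (#|X| == r)].
have Pspec : forall C, C \in Cs -> P C \subset Priv C /\ #|P C| = r.
  move=> C CCs; rewrite /P; case: pickP => [X /andP [h1 /eqP h2] | h] //=.
  have [X h1 h2] := subset_card (hr C CCs).
  by move: (h X); rewrite h1 h2 eqxx.
have PC : forall C x, C \in Cs -> x \in P C -> x \in Priv C.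
  by move=> C x CCs; apply: subsetP; case: (Pspec C CCs).
pose S := (B :&: \bigcup_(Bl in G) Bl) :|: \bigcup_(C in Cs) P C.
have cS : t + k * r <= #|S|.
  rewrite cardsU.
  have -> : (B :&: \bigcup_(Bl in G) Bl) :&: \bigcup_(C in Cs) P C = set0.
    apply/setP => x; rewrite in_set0; apply/negP; rewrite !inE.
    case/andP => /andP [xB _] /bigcupP [C CCs /(PC C x CCs)].
    by rewrite inE xB /= andbF.
  have := @sum_card_disj _ _ P k Cs cCs.
  have e : \sum_(i in Cs) #|P i| = k * r.
    rewrite -cCs -sum_nat_const; apply: eq_bigr => i iCs; by case: (Pspec i iCs).
  rewrite e cards0 subn0.
  have hd : forall i j x, i \in Cs -> j \in Cs -> x \in P i -> x \in P j -> i = j.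
    move=> i j x iCs jCs /(PC i x iCs) xi /(PC j x jCs) xj.
    move: xi; rewrite inE => /andP [_ /andP [_ /forall_inP /(_ j jCs)]].
    by rewrite (PrivC _ _ xj) /= => /eqP.
  move/(_ hd) => h; exact: leq_add hG h.
have [T sT cT] : exists2 T : {set 'I_v}, T \subset S & #|T| = w.
  apply: subset_card; exact: leq_trans hwk cS.
have SP : forall x, x \in S -> x \in B \/ exists2 C, C \in Cs & x \in P C.
  move=> x; rewrite inE => /orP [/setIP [xB _]|/bigcupP [C CCs xC]]; first by left.
  by right; exists C.
apply: (no_common (T:=T) (P0 := B |: Cs) hI cT).
  rewrite PtE; apply/and3P; split.
  - by apply/subsetP => Z /setU1P [->|/(subsetP CsF)].
  - by rewrite cardsU1 cCs BCs add1n.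
  - apply: (subset_trans sT); apply: cover_sub => x /SP [xB|[C CCs xC]].
      by exists B; rewrite ?setU11.
    by exists C; rewrite ?in_setU1 ?CCs ?orbT // (PrivC _ _ (PC _ _ CCs xC)).
move=> Z /setU1P [->|ZCs].
  exists G => //; rewrite PtE GF cG leqnn /=.
  apply: (subset_trans sT); apply: cover_sub => x; rewrite inE.
  case/orP => [/setIP [_ /bigcupP [D DG xD]]|/bigcupP [C CCs xC]].
    by exists D.
  by exists C; [apply: (subsetP sCs) | apply: (PrivC _ _ (PC _ _ CCs xC))].
have ZF := subsetP CsF Z ZCs.
exists (B |: (Cs :\ Z) :|: (O Z @: P Z)).
  rewrite PtE; apply/and3P; split.
  - apply/subsetP => Y /setUP [/setU1P [->|/setD1P [_ /(subsetP CsF)]] //|].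
    by case/imsetP => x xP ->; have [] := Ospec Z x ZF (PrivC _ _ (PC _ _ ZCs xP)).
  - apply: (leq_trans (card3 _ _ _)).
    have h1 := leq_imset_card (O Z) (P Z).
    have h2 : #|Cs| = (Z \in Cs) + #|Cs :\ Z| := cardsD1 Z Cs.
    have [_ h3] := Pspec Z ZCs.
    rewrite ZCs in h2.
    rewrite cCs in h2.
    exact: (arB h1 h2 h3 hkr).
  - apply: (subset_trans sT); apply: cover_sub => x /SP [xB|[C CCs xC]].
      by exists B; rewrite // !inE eqxx.
    case: (eqVneq C Z) => [eCZ|nCZ].
      subst C; exists (O Z x); first by rewrite inE; apply/orP; right; apply/imsetP; exists x.
      by have [] := Ospec Z x ZF (PrivC _ _ (PC _ _ ZCs xC)).
    exists C; first by rewrite !inE nCZ CCs orbT.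
    exact: (PrivC _ _ (PC _ _ CCs xC)).
rewrite !inE eqxx /= (negbTE (CsB Z ZCs)) /=; apply/imsetP => [[x xP eZ]].
by have [_ _] := Ospec Z x ZF (PrivC _ _ (PC _ _ ZCs xP)); rewrite -eZ eqxx.
Qed.

Lemma upper_card t w v (F : {set {set 'I_v}}) :
  is_IPPS t w F -> 2 <= t -> w <= t^2 %/ 4 + t -> #|F| <= #|\bigcup_(B in F) B|.
Proof.
move=> hI ht hw.
move: {2}#|F| (erefl #|F|) => n; elim: n F hI => [|n IH] F hI hn.
  by rewrite hn.
case: (boolP [exists B in F, exists x in B, [forall C in F, (x \in C) ==> (C == B)]]).
  case/exists_inP => B BF /exists_inP [x xB /forall_inP hx].
  have hI' := IPPS_sub hI (subsetDl F [set B]).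
  have cF' : #|F :\ B| = n by move: hn; rewrite (cardsD1 B) BF; case.
  have le1 := IH _ hI' cF'.
  have pr : \bigcup_(D in F :\ B) D \proper \bigcup_(D in F) D.
    apply/properP; split.
      apply/subsetP => y /bigcupP [D /setD1P [_ DF] yD]; apply/bigcupP; by exists D.
    exists x; first by apply/bigcupP; exists B.
    apply/negP => /bigcupP [D /setD1P [DB DF] xD].
    by move: (hx D DF); rewrite xD /= (negbTE DB).
  have := proper_card pr; rewrite hn -cF'; move: le1.
  move: #|F :\ B| #|\bigcup_(D in F :\ B) D| #|\bigcup_(D in F) D| => a b c; lia.
move=> hn'; exfalso.
have : 0 < #|F| by rewrite hn.
case/card_gt0P => B0 B0F.
apply: (key hI ht hw B0F) => C x CF xC.
case: (boolP [exists D in F, (x \in D) && (D != C)]) => [/exists_inP [D DF hD]|hD].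
  by exists D.
exfalso; apply: (negP hn'); apply/exists_inP; exists C => //.
apply/exists_inP; exists x => //; apply/forall_inP => D DF; apply/implyP => xD.
case: (eqVneq D C) => // nDC; exfalso; apply: (negP hD); apply/exists_inP.
by exists D => //; rewrite xD nDC.
Qed.

Theorem corollary3 (t w v : nat) :
  2 <= w -> w <= v -> 2 <= t -> w <= (t ^ 2) %/ 4 + t ->
  v - w + 1 <= I_t t w v <= v.
Proof.
move=> h1 h2 h3 h4; apply/andP; split; first exact: lower.
rewrite /I_t; apply/bigmax_leqP => F hF.
apply: leq_trans (upper_card hF h3 h4) _.
by rewrite -[X in _ <= X]card_ord max_card.
Qed.
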